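(* Let $S_{p/q}=\{\mathrm{span}(n) : n\in\mathbb{N}\}\subseteq\mathbb{R}$. (i) If $p<2q$, then $S_{p/q}$ is dense in the interval $[0,\ \rho(M_0)]$. (ii) If $p>2q$, then $S_{p/q}$ is nowhere dense in $\mathbb{R}$.
   Context: Let $p>q>1$ be coprime integers, $A_p=\{0,\dots,p-1\}$, $A_q=\{0,\dots,q-1\}$. For $n\in\mathbb{N}$ and $a\in\mathbb{Z}$, let $\tau(n,a)=\frac{np+a}{q}$, defined only when $q$ divides $np+a$. Let $\mathcal{T}_{p/q}$ be the deterministic automaton with state set $\mathbb{N}$, alphabet $A_p$, initial state $0$, and transitions $n\xrightarrow{a}\tau(n,a)$ for $a\in A_p$ with $\tau(n,a)$ defined. Every state $n$ has exactly one outgoing transition labelled by a letter of $A_q$ and exactly one labelled by a letter of $\{p-q,\dots,p-1\}$; the minimal word $\mu_n$ (resp. maximal word $M_n$) is the unique infinite word over $A_q$ (resp. over $\{p-q,\dots,p-1\}$) labelling a path of $\mathcal{T}_{p/q}$ starting at state $n$. For an infinite word $a_1a_2a_3\cdots$ of integers, its real value is $\rho(a_1a_2\cdots)=\sum_{i\ge 1} a_i\left(\frac{p}{q}\right)^{-i}$. The span of $n$ is $\mathrm{span}(n)=\rho(M_n)-\rho(\mu_n)$. *)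

(* Defs.v *)
From mathcomp Require Import all_boot all_order all_algebra.
From mathcomp Require Import all_classical all_reals all_analysis.
Set Implicit Arguments. Unset Strict Implicit. Unset Printing Implicit Defensive.
Import Order.TTheory GRing.Theory Num.Theory.
Import numFieldNormedType.Exports.

Definition trans (p q n a m : nat) : bool :=
  [&& a < p, q %| n * p + a & m == (n * p + a) %/ q].

(* An infinite word w (w i is its (i+1)-th letter) labels a path of
   T_{p/q} starting at state n. *)
Definition labels_path (p q n : nat) (w : nat -> nat) : Prop :=
  exists s : nat -> nat, s 0 = n /\ forall i, trans p q (s i) (w i) (s i.+1).

(* The unique letter of A_q (resp. of {p-q,...,p-1}) labelling a transition
   out of state n. *)
Definition min_letter (p q n : nat) : nat := q.-1 - ((n * p + q.-1) %% q).
Definition max_letter (p q n : nat) : nat := p.-1 - ((n * p + p.-1) %% q).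

Fixpoint min_state (p q n i : nat) : nat :=
  if i is i'.+1 then
    let m := min_state p q n i' in (m * p + min_letter p q m) %/ q
  else n.
Fixpoint max_state (p q n i : nat) : nat :=
  if i is i'.+1 then
    let m := max_state p q n i' in (m * p + max_letter p q m) %/ q
  else n.

(* mu_n and M_n, as infinite words (index i = letter number i+1). *)
Definition minword (p q n : nat) : nat -> nat :=
  fun i => min_letter p q (min_state p q n i).
Definition maxword (p q n : nat) : nat -> nat :=
  fun i => max_letter p q (max_state p q n i).

Local Open Scope ring_scope.

Definition rho (R : realType) (p q : nat) (w : nat -> nat) : R :=
  limn (series (fun i : nat => ((w i)%:R * (q%:R / p%:R) ^+ i.+1 : R))).

Definition span (R : realType) (p q n : nat) : R :=
  rho R p q (maxword p q n) - rho R p q (minword p q n).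

Definition spans (R : realType) (p q : nat) : set R :=
  [set x | exists n : nat, x = span R p q n].

Arguments rho R p q w : clear implicits.
Arguments span R p q n : clear implicits.
Arguments spans R p q : clear implicits.

(* Main.v *)
Require Import Defs.
From mathcomp Require Import all_boot all_order all_algebra.
From mathcomp Require Import all_classical all_reals all_analysis.
From mathcomp Require Import zify ring lra.
Set Implicit Arguments. Unset Strict Implicit. Unset Printing Implicit Defensive.
Import Order.TTheory GRing.Theory Num.Theory.
Import numFieldNormedType.Exports.

Fixpoint Dseq (p q : nat) (w : nat -> nat) (k : nat) : nat :=
  if k is k'.+1 then (p * Dseq p q w k' + p.-1 - w k') %/ q else 0.

Lemma ml_lt p q n : (0 < q)%N -> (min_letter p q n < q)%N.
Proof. rewrite /min_letter => q0; lia. Qed.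

Lemma ml_dvd p q n : (0 < q)%N -> (q %| n * p + min_letter p q n)%N.
Proof.
move=> q0; rewrite /min_letter.
have := ltn_pmod (n * p + q.-1) q0.
have := divn_eq (n * p + q.-1) q.
set r := (_ %% q); set d := (_ %/ q) => E lt.
have -> : (n * p + (q.-1 - r) = d * q)%N by lia.
exact: dvdn_mull.
Qed.

Lemma ms_S p q n k : (0 < q)%N ->
  (min_state p q n k.+1 * q = min_state p q n k * p + min_letter p q (min_state p q n k))%N.
Proof. by move=> q0; rewrite /= divnK // ml_dvd. Qed.

Lemma Dmax p q n k : (1 < q)%N -> (q < p)%N ->
  max_state p q n k = (min_state p q n k + Dseq p q (minword p q n) k)%N.
Proof.
move=> q1 qp; elim: k => [|k IH]; first by rewrite /= addn0.
rewrite /=.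
rewrite IH /minword.
set s := min_state p q n k; set d := Dseq _ _ _ k.
set a := min_letter p q s.
have q0 : (0 < q)%N by lia.
have alt : (a < q)%N by apply: ml_lt.
have := ml_dvd p s q0; rewrite -/a => /dvdnP [S' HS].
set X := (p * d + p.-1 - a)%N.
have HX := divn_eq X q; have HXl := ltn_pmod X q0.
have E1 : ((s + d) * p + p.-1 = S' * q + X)%N by rewrite /X; lia.
rewrite /max_letter E1 modnMDl HS mulnK //.
have -> : ((s + d) * p + (p.-1 - X %% q) = (S' + X %/ q) * q)%N by lia.
by rewrite mulnK.
Qed.

Lemma Dseq_prefix p q w w' N : (forall k, (k < N)%N -> w k = w' k) ->
  Dseq p q w N = Dseq p q w' N.
Proof.
elim: N => [//|N IH] H /=.
rewrite IH ?H // => k kN; apply: H; exact: ltnW.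
Qed.

Lemma Dstep p q w k : (1 < q)%N -> (q < p)%N -> (w k < q)%N ->
  (q * Dseq p q w k.+1 <= p * Dseq p q w k + p)%N /\
  (p * Dseq p q w k <= q * Dseq p q w k.+1 + p)%N.
Proof.
move=> q1 qp wk /=; set d := Dseq p q w k; set X := (p * d + p.-1 - w k)%N.
have q0 : (0 < q)%N by lia.
have HX := divn_eq X q; have HXl := ltn_pmod X q0.
rewrite /X in HX HXl *; set Q := (_ %/ q) in HX *; set r := (_ %% q) in HX HXl.
lia.
Qed.

Definition lo p q d := ((p * d + p.-1 - q.-1) %/ q)%N.

Lemma Dtwo p q w k : (1 < q)%N -> (q < p)%N -> (w k < q)%N ->
  Dseq p q w k.+1 = lo p q (Dseq p q w k) \/
  Dseq p q w k.+1 = (lo p q (Dseq p q w k)).+1.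
Proof.
move=> q1 qp wk /=; rewrite /lo; set d := Dseq p q w k.
set X := (p * d + p.-1 - w k)%N; set Y := (p * d + p.-1 - q.-1)%N.
have q0 : (0 < q)%N by lia.
have HX := divn_eq X q; have HXl := ltn_pmod X q0.
have HY := divn_eq Y q; have HYl := ltn_pmod Y q0.
have XY : (Y <= X < Y + q)%N by rewrite /X /Y; lia.
set A := X %/ q in HX *; set B := Y %/ q in HY *.
have h1 : (B * q < (A + 1) * q)%N by lia.
have h2 : (A * q < (B + 2) * q)%N by lia.
rewrite ltn_pmul2r // in h1; rewrite ltn_pmul2r // in h2.
lia.
Qed.

Fixpoint En p q N : seq nat :=
  if N is N'.+1 then map (lo p q) (En p q N') ++ map (fun d => (lo p q d).+1) (En p q N')
  else [:: 0%N].

Lemma size_En p q N : size (En p q N) = (2 ^ N)%N.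
Proof. by elim: N => //= N IH; rewrite size_cat !size_map IH expnS mul2n addnn. Qed.

Lemma Dseq_En p q w N : (1 < q)%N -> (q < p)%N -> (forall k, (w k < q)%N) ->
  Dseq p q w N \in En p q N.
Proof.
move=> q1 qp wq; elim: N => [|N IH]; first by rewrite inE.
rewrite [En _ _ _.+1]/= mem_cat.
case: (Dtwo q1 qp (wq N)) => ->.
  by rewrite (map_f (lo p q) IH).
by rewrite (map_f (fun d => (lo p q d).+1) IH) orbT.
Qed.

Lemma ml_lt' p q n i : (1 < q)%N -> (minword p q n i < q)%N.
Proof. by move=> q1; apply: ml_lt; lia. Qed.

Lemma choose_a p q e v : (1 < q)%N -> (q < p)%N ->
  ((p * e + p.-1 - q.-1) %/ q <= v <= (p * e + p.-1) %/ q)%N ->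
  exists2 a, (a < q)%N & ((p * e + p.-1 - a) %/ q)%N = v.
Proof.
move=> q1 qp /andP [lv vt].
have q0 : (0 < q)%N by lia.
case: (leqP (p * e + p.-1 - q.-1) (q * v)) => H.
- exists (p * e + p.-1 - q * v)%N.
    by lia.
  have : (q * v <= p * e + p.-1)%N by rewrite mulnC -leq_divRL.
  move=> H2; have -> : (p * e + p.-1 - (p * e + p.-1 - q * v) = v * q)%N by lia.
  by rewrite mulnK.
- exists q.-1; first by lia.
  apply/eqP; rewrite eqn_leq lv /=.
  rewrite leq_divRL //; lia.
Qed.

Lemma cover_e p q M v : (1 < q)%N -> (q < p)%N -> (p < 2 * q)%N ->
  (v <= (p * M + p.-1) %/ q)%N ->
  exists e, exists2 a, (e <= M)%N /\ (a < q)%N & ((p * e + p.-1 - a) %/ q)%N = v.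
Proof.
move=> q1 qp p2q; elim: M v => [|M IH] v vM.
  rewrite muln0 add0n in vM.
  have [a aq av] : exists2 a, (a < q)%N & ((p * 0 + p.-1 - a) %/ q)%N = v.
    apply: choose_a => //; rewrite muln0 add0n vM andbT.
    rewrite divn_small //; lia.
  by exists 0%N, a.
case: (leqP v ((p * M + p.-1) %/ q)) => H.
  by have [e [a [eM aq] ev]] := IH v H; exists e, a => //; split => //; lia.
have [a aq av] : exists2 a, (a < q)%N & ((p * M.+1 + p.-1 - a) %/ q)%N = v.
  apply: choose_a => //; rewrite vM andbT.
  have q0 : (0 < q)%N by lia.
  rewrite -ltnS ltn_divLR //.
  move: H; rewrite ltn_divLR // => H.
  lia.
by exists M.+1, a.
Qed.

Lemma Dreach p q N v : (1 < q)%N -> (q < p)%N -> (p < 2 * q)%N ->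
  (v <= Dseq p q (fun _ => 0%N) N)%N ->
  exists w, (forall k, (w k < q)%N) /\ Dseq p q w N = v.
Proof.
move=> q1 qp p2q; elim: N v => [|N IH] v vle.
  by exists (fun _ => 0%N); split => [k|]; [lia | move: vle; rewrite /=; lia].
move: vle; rewrite [Dseq _ _ _ N.+1]/= subn0 => vle.
have [e [a [eM aq] ev]] := cover_e q1 qp p2q vle.
have [w [wq we]] := IH e eM.
exists (fun k => if k == N then a else w k); split.
  by move=> k; case: ifP.
rewrite /= eqxx -ev; congr ((p * _ + _ - _) %/ _).
rewrite -we; apply: Dseq_prefix => k kN; rewrite ifN //; lia.
Qed.

Lemma ml_shift p q s c : min_letter p q (s + q * c) = min_letter p q s.
Proof.
rewrite /min_letter.
have -> : ((s + q * c) * p + q.-1 = (c * p) * q + (s * p + q.-1))%N by ring.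
by rewrite modnMDl.
Qed.

Lemma shift p q n t N k : (0 < q)%N -> (k <= N)%N ->
  min_state p q (n + q ^ N * t) k = (min_state p q n k + p ^ k * q ^ (N - k) * t)%N.
Proof.
move=> q0; elim: k => [|k IH] kN; first by rewrite subn0 /= expn0 mul1n.
rewrite /= IH; last by lia.
have -> : (N - k = (N - k.+1).+1)%N by lia.
set s := min_state p q n k.
have -> : (p ^ k * q ^ (N - k.+1).+1 * t = q * (p ^ k * q ^ (N - k.+1) * t))%N.
  by rewrite expnS; ring.
rewrite ml_shift.
have -> : ((s + q * (p ^ k * q ^ (N - k.+1) * t)) * p + min_letter p q s
          = (p ^ k.+1 * q ^ (N - k.+1) * t) * q + (s * p + min_letter p q s))%N.
  by rewrite expnS; ring.
by rewrite divnMDl // addnC.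
Qed.

Lemma inverse_mod P q : (1 < q)%N -> (0 < P)%N -> coprime P q ->
  exists i, ((i * P) %% q = 1)%N.
Proof.
move=> q1 P0 /(coprimeP _ P0) [[u1 u2] /= H].
exists u1.
have -> : (u1 * P = u2 * q + 1)%N by lia.
by rewrite modnMDl modn_small.
Qed.

Lemma realize p q N u : (1 < q)%N -> (q < p)%N -> coprime p q ->
  (forall k, (u k < q)%N) ->
  exists n, forall k, (k < N)%N -> minword p q n k = u k.
Proof.
move=> q1 qp cop uq; have q0 : (0 < q)%N by lia.
elim: N => [|N [n Hn]]; first by exists 0%N.
set s := min_state p q n N; set P := (p ^ N.+1)%N.
have [i Hi] : exists i, ((i * P) %% q = 1)%N.
  apply: inverse_mod => //; first by rewrite expn_gt0; lia.
  exact: coprimeXl.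
set B := (s * p + q.-1)%N.
set c := (q.-1 - u N + q - B %% q)%N.
exists (n + q ^ N * (i * c))%N => k kN.
rewrite /minword (shift _ _ _ q0); last by lia.
case: (ltnP k N) => kN'.
  have -> : (N - k = (N - k.+1).+1)%N by lia.
  have -> : (p ^ k * q ^ (N - k.+1).+1 * (i * c) = q * (p ^ k * q ^ (N - k.+1) * (i * c)))%N.
    by rewrite expnS; ring.
  rewrite ml_shift.
  exact: Hn.
have -> : k = N by lia.
rewrite subnn expn0 muln1 /min_letter -/s.
have -> : ((s + p ^ N * (i * c)) * p + q.-1 = B + (i * P) * c)%N.
  by rewrite /B /P expnS; ring.
rewrite -modnDmr -modnMml Hi mul1n modnDmr.
have HB := divn_eq B q; have HBl := ltn_pmod B q0.
have -> : (B + c = (B %/ q).+1 * q + (q.-1 - u N))%N.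
  by rewrite /c; move: (uq N); lia.
rewrite modnMDl modn_small; last by lia.
move: (uq N); lia.
Qed.

Lemma Ml_dvd p q n : (0 < q)%N -> (q < p)%N -> (q %| n * p + max_letter p q n)%N.
Proof.
move=> q0 qp; rewrite /max_letter.
have := ltn_pmod (n * p + p.-1) q0.
have := divn_eq (n * p + p.-1) q.
set r := (_ %% q); set d := (_ %/ q) => E lt.
have -> : (n * p + (p.-1 - r) = d * q)%N by lia.
exact: dvdn_mull.
Qed.

Lemma Ms_S p q n k : (0 < q)%N -> (q < p)%N ->
  (max_state p q n k.+1 * q = max_state p q n k * p + max_letter p q (max_state p q n k))%N.
Proof. by move=> q0 qp; rewrite /= divnK // Ml_dvd. Qed.


Local Open Scope classical_set_scope.
Local Open Scope ring_scope.

Lemma series_path (R : realType) p q (s a : nat -> nat) n N :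
  (0 < p)%N -> s 0%N = n ->
  (forall k, s k.+1 * q = s k * p + a k)%N ->
  series (fun i : nat => ((a i)%:R * (q%:R / p%:R) ^+ i.+1 : R)) N =
  q%:R * (s N)%:R * (q%:R / p%:R) ^+ N - q%:R * n%:R.
Proof.
move=> p0 s0 Hs; rewrite /series /=.
have pn0 : (p%:R : R) != 0 by rewrite pnatr_eq0 -lt0n.
elim: N => [|N IH]; first by rewrite big_geq // s0 expr0 mulr1 subrr.
rewrite big_nat_recr //= IH.
have : ((s N.+1 * q)%N%:R : R) = ((s N * p + a N)%N%:R) by rewrite Hs.
rewrite natrD !natrM => E.
have -> : ((a N)%:R : R) = (s N.+1)%:R * q%:R - (s N)%:R * p%:R by rewrite E; ring.
rewrite exprS; set X := (q%:R / p%:R) ^+ N.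
by field.
Qed.

Definition xx (R : realType) p q : R := q%:R / p%:R.
Definition KK (R : realType) p q : R := p%:R * q%:R / (p%:R - q%:R).

Lemma Kstep (R : realType) p q k : (q < p)%N ->
  KK R p q * xx R p q ^+ k - KK R p q * xx R p q ^+ k.+1 = p%:R * xx R p q ^+ k.+1.
Proof.
move=> qp; rewrite /KK /xx exprS; set X := (_ / _) ^+ k.
have pn0 : (p%:R : R) != 0 by rewrite pnatr_eq0; lia.
have pq0 : (p%:R - q%:R : R) != 0.
  by rewrite subr_eq0 eqr_nat; lia.
by field; rewrite pn0 pq0.
Qed.

Lemma xx_ge0 (R : realType) p q : 0 <= xx R p q.
Proof. by rewrite /xx divr_ge0. Qed.

Lemma KK_ge0 (R : realType) p q : (q < p)%N -> 0 <= KK R p q.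
Proof.
move=> qp; rewrite /KK divr_ge0 // ?mulr_ge0 // subr_ge0 ler_nat; lia.
Qed.

Lemma series_bound (R : realType) p q (w : nat -> nat) N : (q < p)%N ->
  (forall i, (w i <= p)%N) ->
  series (fun i : nat => ((w i)%:R * xx R p q ^+ i.+1 : R)) N <=
  KK R p q - KK R p q * xx R p q ^+ N.
Proof.
move=> qp wp; rewrite /series /=.
elim: N => [|N IH]; first by rewrite big_geq // expr0 mulr1 subrr.
rewrite big_nat_recr //=.
rewrite (_ : KK R p q - KK R p q * xx R p q ^+ N.+1 =
   (KK R p q - KK R p q * xx R p q ^+ N) +
   (KK R p q * xx R p q ^+ N - KK R p q * xx R p q ^+ N.+1)); last by ring.
rewrite Kstep // lerD //.
by rewrite ler_wpM2r ?exprn_ge0 ?xx_ge0 // ler_nat.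
Qed.

Lemma series_cvg (R : realType) p q (w : nat -> nat) : (q < p)%N ->
  (forall i, (w i <= p)%N) ->
  cvgn (series (fun i : nat => ((w i)%:R * xx R p q ^+ i.+1 : R))).
Proof.
move=> qp wp; apply: nondecreasing_is_cvgn.
  apply: (@nondecreasing_series _ _ xpredT 0%N) => n _ _.
  by rewrite mulr_ge0 ?exprn_ge0 ?xx_ge0.
exists (KK R p q) => _ [N _ <-].
apply: le_trans (series_bound R N qp wp) _.
by rewrite lerBlDr lerDl mulr_ge0 ?KK_ge0 ?exprn_ge0 ?xx_ge0.
Qed.

Definition cc (R : realType) p q n N : R :=
  q%:R * (Dseq p q (minword p q n) N)%:R * xx R p q ^+ N.

Definition Smin (R : realType) p q n :=
  series (fun i : nat => ((minword p q n i)%:R * xx R p q ^+ i.+1 : R)).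
Definition Smax (R : realType) p q n :=
  series (fun i : nat => ((maxword p q n i)%:R * xx R p q ^+ i.+1 : R)).

Lemma series_diff (R : realType) p q n N : (1 < q)%N -> (q < p)%N ->
  Smax R p q n N - Smin R p q n N = cc R p q n N.
Proof.
move=> q1 qp; have q0 : (0 < q)%N by lia.
have p0 : (0 < p)%N by lia.
rewrite /Smax /Smin /xx.
rewrite (@series_path R p q (max_state p q n) (maxword p q n) n N p0 erefl); last first.
  by move=> k; rewrite Ms_S.
rewrite (@series_path R p q (min_state p q n) (minword p q n) n N p0 erefl); last first.
  by move=> k; rewrite ms_S.
rewrite /cc /xx Dmax // natrD; ring.
Qed.

Lemma maxword_le p q n i : (maxword p q n i <= p)%N.
Proof. rewrite /maxword /max_letter; lia. Qed.

Lemma minword_le p q n i : (1 < q)%N -> (q < p)%N -> (minword p q n i <= p)%N.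
Proof. by move=> q1 qp; have := ml_lt' p n i q1; lia. Qed.

Lemma span_lim (R : realType) p q n : (1 < q)%N -> (q < p)%N ->
  cvgn (cc R p q n) /\ Defs.span R p q n = limn (cc R p q n).
Proof.
move=> q1 qp.
have c1 : cvgn (Smax R p q n) by apply: series_cvg => // i; exact: maxword_le.
have c2 : cvgn (Smin R p q n) by apply: series_cvg => // i; exact: minword_le.
have E : cc R p q n = Smax R p q n - Smin R p q n.
  by apply/funext => N; rewrite -series_diff.
rewrite E; split; first exact: is_cvgB.
by rewrite limB.
Qed.

Lemma cc_step (R : realType) p q n k : (1 < q)%N -> (q < p)%N ->
  `|cc R p q n k.+1 - cc R p q n k| <= p%:R * xx R p q ^+ k.+1.
Proof.
move=> q1 qp.
have pn0 : (p%:R : R) != 0 by rewrite pnatr_eq0; lia.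
set D' := Dseq p q (minword p q n) k.+1; set D := Dseq p q (minword p q n) k.
have [h1 h2] := @Dstep p q (minword p q n) k q1 qp (ml_lt' p n k q1).
rewrite -/D' -/D in h1 h2.
have E : cc R p q n k.+1 - cc R p q n k = (q%:R * D'%:R - p%:R * D%:R) * xx R p q ^+ k.+1.
  rewrite /cc -/D' -/D /xx exprS; set X := (_ / _) ^+ k.
  by field.
rewrite E normrM (ger0_norm (exprn_ge0 _ (xx_ge0 R p q))) ler_wpM2r ?exprn_ge0 ?xx_ge0 //.
rewrite ler_norml.
have h1' : ((q * D')%N%:R : R) <= ((p * D + p)%N%:R) by rewrite ler_nat.
have h2' : ((p * D)%N%:R : R) <= ((q * D' + p)%N%:R) by rewrite ler_nat.
rewrite !natrD !natrM in h1' h2'.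
apply/andP; split; lra.
Qed.

Lemma cc_bound (R : realType) p q n N M : (1 < q)%N -> (q < p)%N -> (N <= M)%N ->
  `|cc R p q n M - cc R p q n N| <= KK R p q * xx R p q ^+ N - KK R p q * xx R p q ^+ M.
Proof.
move=> q1 qp; elim: M => [|M IH] NM.
  have E : N = 0%N by lia.
  by rewrite E !subrr normr0.
case: (ltnP M N) => MN.
  have E : N = M.+1 by lia.
  by rewrite E !subrr normr0.
have := IH MN; have := cc_step R n M q1 qp; rewrite -Kstep // => h1 h2.
have -> : cc R p q n M.+1 - cc R p q n N =
  (cc R p q n M.+1 - cc R p q n M) + (cc R p q n M - cc R p q n N) by ring.
apply: le_trans (ler_normD _ _) _.
lra.
Qed.

Lemma span_close (R : realType) p q n N : (1 < q)%N -> (q < p)%N ->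
  `|Defs.span R p q n - cc R p q n N| <= KK R p q * xx R p q ^+ N.
Proof.
move=> q1 qp; have [cv ->] := span_lim R n q1 qp.
have hK : 0 <= KK R p q * xx R p q ^+ N by rewrite mulr_ge0 ?KK_ge0 ?exprn_ge0 ?xx_ge0.
have B : forall M, (N <= M)%N ->
   `|cc R p q n M - cc R p q n N| <= KK R p q * xx R p q ^+ N.
  move=> M NM; apply: le_trans (cc_bound R n q1 qp NM) _.
  by rewrite lerBlDr lerDl mulr_ge0 ?KK_ge0 ?exprn_ge0 ?xx_ge0.
rewrite ler_norml; apply/andP; split.
  rewrite lerBrDr; apply: limr_ge => //; exists N => // M /= NM.
  by move: (B M NM); rewrite ler_norml => /andP []; lra.
rewrite lerBlDr; apply: limr_le => //; exists N => // M /= NM.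
by move: (B M NM); rewrite ler_norml => /andP []; lra.
Qed.

Lemma mem_rem_neq (T : eqType) (x y : T) (s : seq T) :
  y != x -> y \in s -> y \in rem x s.
Proof.
move=> yx; elim: s => [//|z s IH] /=.
rewrite inE => /orP [/eqP yz|ys].
  case: ifP => [/eqP zx|_]; last by rewrite inE yz eqxx.
  by move: yx; rewrite yz zx eqxx.
case: ifP => // _; by rewrite inE IH ?orbT.
Qed.

Lemma cover_len (R : realType) (w b : R) n : forall (s : seq R) (a : R), size s = n ->
  0 <= w ->
  (forall y, a <= y < b -> exists2 c, c \in s & c <= y < c + w) ->
  b - a <= n%:R * w.
Proof.
elim: n => [|n IH] s a sz w0 H.
  case: (leP b a) => ba; first by rewrite mul0r subr_le0.
  have /H [c cs _] : a <= a < b by rewrite lexx ba.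
  by move: sz cs => /size0nil ->.
case: (leP b a) => ba.
  by rewrite (le_trans _ (mulr_ge0 (ler0n _ _) w0)) // subr_le0.
have /H [c cs /andP [ca ac]] : a <= a < b by rewrite lexx ba.
have := IH (rem c s) (c + w); rewrite size_rem // sz /= => /(_ erefl w0).
have H' : forall y, c + w <= y < b -> exists2 c', c' \in rem c s & c' <= y < c' + w.
  move=> y /andP [cy yb].
  have /H [c' c's /andP [c'y yc']] : a <= y < b by rewrite yb andbT; lra.
  exists c' => //; last by rewrite c'y yc'.
  apply: mem_rem_neq => //; apply/negP => /eqP E; move: yc'; rewrite E; lra.
move=> /(_ H') h.
rewrite -natr1 mulrDl mul1r; lra.
Qed.

Lemma geo_small (R : realType) (a C r : R) : 0 <= a -> a < 1 -> 0 <= C -> 0 < r ->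
  exists N : nat, C * a ^+ N < r.
Proof.
move=> a0 a1 C0 r0.
have : `|a| < 1 by rewrite ger0_norm.
move=> /cvg_expr /cvgr0_norm_lt /(_ (r / (C + 1))).
have e0 : 0 < r / (C + 1) by rewrite divr_gt0 // ltr_wpDl.
move=> /(_ e0) [N _ HN].
exists N; have := HN N (leqnn N); rewrite ger0_norm ?exprn_ge0 // => h.
have C1 : 0 < C + 1 by lra.
rewrite ltr_pdivlMr // in h.
have : C * a ^+ N <= a ^+ N * (C + 1).
  by rewrite mulrC ler_wpM2l ?exprn_ge0 //; lra.
lra.
Qed.

Lemma xx_gt0 (R : realType) p q : (0 < q)%N -> (0 < p)%N -> 0 < xx R p q.
Proof. by move=> q0 p0; rewrite /xx divr_gt0 // ltr0n. Qed.

Lemma KK_gt0 (R : realType) p q : (0 < q)%N -> (q < p)%N -> 0 < KK R p q.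
Proof.
move=> q0 qp; rewrite /KK divr_gt0 // ?mulr_gt0 ?ltr0n //; try lia.
by rewrite subr_gt0 ltr_nat.
Qed.

Lemma part2 (R : realType) p q : (1 < q)%N -> (q < p)%N -> (2 * q < p)%N ->
  interior (closure (spans R p q)) = set0.
Proof.
move=> q1 qp p2q; have q0 : (0 < q)%N by lia. have p0 : (0 < p)%N by lia.
apply/seteqP; split => // z /nbhs_ballP [r /= r0 Hr].
set x := xx R p q; set K := KK R p q.
have x0 : 0 < x by apply: xx_gt0.
have K0 : 0 < K by apply: KK_gt0.
have x2 : 2 * x < 1.
  rewrite /x /xx mulrA ltr_pdivrMr ?ltr0n // mul1r.
  by rewrite -natrM ltr_nat.
have t0 : (0 : R) < 2 by lra.
have f0 : (0 : R) < 4 by lra.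
have [N HN] := @geo_small R (2 * x) (4 * K) (r / 2) (ltW (mulr_gt0 t0 x0)) x2
   (ltW (mulr_gt0 f0 K0)) (divr_gt0 r0 t0).
have KN0 : 0 < K * x ^+ N by rewrite mulr_gt0 // exprn_gt0.
set s := map (fun d : nat => q%:R * d%:R * x ^+ N - 2 * K * x ^+ N) (En p q N).
have H : forall y, z - r / 2 <= y < z + r / 2 ->
    exists2 c, c \in s & c <= y < c + 4 * K * x ^+ N.
  move=> y /andP [y1 y2].
  have hy : ball z r y.
    rewrite -ball_normE /ball_ /=; rewrite ltr_norml; apply/andP; split; lra.
  have := Hr y hy (ball y (K * x ^+ N)) (nbhsx_ballx _ _ KN0).
  move=> [u [[n ->]]]; rewrite -ball_normE /ball_ /= => hu.
  have hc := span_close R n N q1 qp.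
  exists (q%:R * (Dseq p q (minword p q n) N)%:R * x ^+ N - 2 * K * x ^+ N).
    apply: (map_f (fun d : nat => q%:R * d%:R * x ^+ N - 2 * K * x ^+ N)).
    apply: Dseq_En => // k; exact: ml_lt'.
  move: hc hu; rewrite /cc -/x -/K ler_norml ltr_norml.
  set c := q%:R * _ * _.
  move=> /andP [h1 h2] /andP [h3 h4]; apply/andP; split; lra.
have := @cover_len R (4 * K * x ^+ N) (z + r / 2) (size s) s (z - r / 2) erefl
  (ltW (mulr_gt0 (mulr_gt0 f0 K0) (exprn_gt0 N x0))) H.
rewrite size_map size_En natrX.
rewrite (_ : 2 ^+ N * (4 * K * x ^+ N) = 4 * K * (2 * x) ^+ N); last first.
  rewrite [(2 * x) ^+ N]exprMn; set a := _ ^+ N; set b := x ^+ N; ring.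
lra.
Qed.

Lemma min_state0 p q k : (0 < q)%N -> min_state p q 0 k = 0%N.
Proof.
move=> q0; elim: k => [//|k IH] /=; rewrite IH /min_letter mul0n add0n modn_small; last by lia.
by rewrite subnn divn_small.
Qed.

Lemma minword0 p q k : (0 < q)%N -> minword p q 0 k = 0%N.
Proof.
move=> q0; rewrite /minword min_state0 // /min_letter mul0n add0n modn_small ?subnn //; lia.
Qed.

Lemma rho_min0 (R : realType) p q : (0 < q)%N -> rho R p q (minword p q 0) = 0.
Proof.
move=> q0; rewrite /rho.
have -> : series (fun i : nat => ((minword p q 0 i)%:R * (q%:R / p%:R) ^+ i.+1 : R)) = cst 0.
  apply/funext => N; rewrite /series /= big1 // => i _; by rewrite minword0 // mul0r.
exact: lim_cst.
Qed.

Lemma choose_v (R : realType) (h y : R) M : 0 < h -> 0 <= y ->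
  exists v, [/\ (v <= M)%N, v%:R * h <= y & (y < v.+1%:R * h \/ v = M)].
Proof.
move=> h0 y0; elim: M => [|M [v [vM vy H]]].
  by exists 0%N; split => //; [rewrite mul0r | right].
case: H => [H|E].
  by exists v; split; [lia | done | left].
subst v.
case: (ltP y ((M.+1)%:R * h)) => H.
  by exists M; split; [lia | done | left].
by exists M.+1; split => //; right.
Qed.

Lemma part1 (R : realType) p q : (1 < q)%N -> (q < p)%N -> coprime p q -> (p < 2 * q)%N ->
  `[0, rho R p q (maxword p q 0)] `<=` closure (spans R p q).
Proof.
move=> q1 qp cop p2q; have q0 : (0 < q)%N by lia. have p0 : (0 < p)%N by lia.
move=> y; rewrite /= in_itv /= => /andP [y0 yb].
move=> B /nbhs_ballP [e /= e0 HB].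
set x := xx R p q; set K := KK R p q.
have x0 : 0 < x by apply: xx_gt0.
have K0 : 0 < K by apply: KK_gt0.
have S0 : Defs.span R p q 0 = rho R p q (maxword p q 0).
  by rewrite /Defs.span rho_min0 // subr0.
have qR0 : (0 : R) < q%:R by rewrite ltr0n.
have x1 : x < 1 by rewrite /x /xx ltr_pdivrMr ?ltr0n // mul1r ltr_nat.
have C0 : 0 <= 2 * K + q%:R by lra.
have [N HN] := @geo_small R x (2 * K + q%:R) e (ltW x0) x1 C0 e0.
set M := Dseq p q (minword p q 0) N.
have hc0 := span_close R 0 N q1 qp.
have hx : 0 < q%:R * x ^+ N by rewrite mulr_gt0 // exprn_gt0.
have [v [vM vy Hv]] := @choose_v R (q%:R * x ^+ N) y M hx y0.
have M0 : M = Dseq p q (fun _ => 0%N) N.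
  by apply: Dseq_prefix => k _; rewrite minword0.
have vM' : (v <= Dseq p q (fun _ => 0%N) N)%N by rewrite -M0.
have [w [wq wv]] := @Dreach p q N v q1 qp p2q vM'.
have [n Hn] := realize N q1 qp cop wq.
have Dn : Dseq p q (minword p q n) N = v.
  by rewrite -wv; apply: Dseq_prefix.
have hc := span_close R n N q1 qp.
exists (Defs.span R p q n); split; first by exists n.
apply: HB; rewrite -ball_normE /ball_ /=.
move: hc hc0; rewrite /cc Dn -/M -/x -/K !ler_norml => /andP [h1 h2] /andP [h3 h4].
rewrite S0 in h3 h4.
have hv : `|y - q%:R * v%:R * x ^+ N| <= (q%:R + K) * x ^+ N.
  rewrite ler_norml; case: Hv => [Hv|Ev].
    apply/andP; split; nra.
  rewrite Ev in vy *; apply/andP; split; nra.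
move: hv; rewrite ler_norml => /andP [h5 h6].
rewrite ltr_norml; apply/andP; split; nra.
Qed.

Theorem mainTheorem10 (R : realType) (p q : nat) :
  (1 < q)%N -> (q < p)%N -> coprime p q ->
  ((p < 2 * q)%N ->
     `[0, rho R p q (maxword p q 0)] `<=` closure (spans R p q)) /\
  ((2 * q < p)%N -> interior (closure (spans R p q)) = set0).
Proof.
move=> q1 qp cop; split => H; [exact: part1 | exact: part2].
Qed.
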